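(* Let $k\ge 4$ and let $\sigma\in S_k\setminus Z_k$ with $\sigma(1)=1$. Then there exists $i\in\{1,2,\dots,k\}$ such that $F_i(\sigma)\in S_{k-1}\setminus Z_{k-1}$.
   Context: $S_k$ is the group of permutations of $\{1,\dots,k\}$, and $Z_k=\{z_0,\dots,z_{k-1}\}\subseteq S_k$ is the subgroup of cyclic shifts, $z_h(i)=i+h$ if $i\le k-h$ and $z_h(i)=i+h-k$ if $i>k-h$. For $i\in\{1,\dots,k\}$ and $\sigma\in S_k$, $F_i(\sigma)\in S_{k-1}$ is defined for $j\in\{1,\dots,k-1\}$ by: $F_i(\sigma)(j)=\sigma(j)$ if $j<i$ and $\sigma(j)<\sigma(i)$; $=\sigma(j)-1$ if $j<i$ and $\sigma(j)>\sigma(i)$; $=\sigma(j+1)$ if $j\ge i$ and $\sigma(j+1)<\sigma(i)$; $=\sigma(j+1)-1$ if $j\ge i$ and $\sigma(j+1)>\sigma(i)$. (That is, delete position $i$ and the value $\sigma(i)$ and relabel order-preservingly.) *)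

(* Defs.v *)
From mathcomp Require Import all_boot all_fingroup.
Set Implicit Arguments. Unset Strict Implicit. Unset Printing Implicit Defensive.

(* Conventions: S_k is {perm 'I_k}, positions/values 0-based:
   paper's i in {1..k} corresponds to ordinal i-1. *)

Definition zshift_fun (k h : nat) (i : 'I_k) : 'I_k :=
  Ordinal (ltn_pmod (i + h) (leq_ltn_trans (leq0n i) (ltn_ord i))).

Definition in_Zk (k : nat) (s : {perm 'I_k}) : Prop :=
  exists h : nat, h < k /\ forall i : 'I_k, s i = zshift_fun h i.

(* F_i: delete position i and value s i, relabel order-preservingly. *)
Definition F_fun (k : nat) (i : 'I_k.+1) (s : {perm 'I_k.+1}) (j : 'I_k) : 'I_k :=
  odflt j (unlift (s i) (s (lift i j))).

Lemma F_fun_spec k (i : 'I_k.+1) (s : {perm 'I_k.+1}) (j : 'I_k) :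
  lift (s i) (F_fun i s j) = s (lift i j).
Proof.
rewrite /F_fun; case: unliftP => [j' -> //|].
by move/perm_inj => /eqP; rewrite eq_sym (negbTE (neq_lift _ _)).
Qed.

Lemma F_fun_inj k (i : 'I_k.+1) (s : {perm 'I_k.+1}) : injective (F_fun i s).
Proof.
move=> a b /(congr1 (lift (s i))); rewrite !F_fun_spec => /perm_inj.
exact: lift_inj.
Qed.

Definition F (k : nat) (i : 'I_k.+1) (s : {perm 'I_k.+1}) : {perm 'I_k} :=
  perm (@F_fun_inj k i s).

(* Main.v *)
Require Import Defs.
From mathcomp Require Import all_boot all_fingroup.
From mathcomp Require Import zify.

Lemma incr_ge n (f : {perm 'I_n}) :
  (forall a b : 'I_n, a < b -> f a < f b) -> forall i : 'I_n, i <= f i.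
Proof.
move=> Hf [m Hm]; elim: m Hm => [|m IH] Hm //=.
have := Hf (Ordinal (ltnW Hm)) (Ordinal Hm) (ltnSn m).
have := IH (ltnW Hm); simpl; lia.
Qed.

Lemma incr_id n (s : {perm 'I_n}) :
  (forall a b : 'I_n, a < b -> s a < s b) -> forall i, s i = i.
Proof.
move=> Hf i.
have Hinv : forall a b : 'I_n, a < b -> (s^-1)%g a < (s^-1)%g b.
  move=> a b ab; case: (ltngtP ((s^-1)%g a) ((s^-1)%g b)) => // h.
  - have := Hf _ _ h; rewrite !permKV; lia.
  - move/val_inj: h => /(congr1 s); rewrite !permKV => e; subst; by rewrite ltnn in ab.
have h1 := @incr_ge _ _ Hf i.
have h2 := @incr_ge _ _ Hinv (s i); rewrite permK in h2.
apply: val_inj; apply/eqP; rewrite eqn_leq h1 h2 //.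
Qed.

Lemma bumpE h i : bump h i = (h <= i) + i.
Proof. by []. Qed.

Theorem lemma4p5 (k : nat) (hk : 3 <= k) (s : {perm 'I_k.+1}) :
  ~ in_Zk s -> s ord0 = ord0 -> exists i : 'I_k.+1, ~ in_Zk (F i s).
Proof.
move=> nZ s0.
have nid : ~ (forall i, s i = i).
  move=> H; apply: nZ; exists 0; split => // i; apply: val_inj.
  by rewrite H /= addn0 modn_small.
have [a [b [ab sab]]] : exists a b : 'I_k.+1, a < b /\ s b < s a.
  case: (boolP [exists a : 'I_k.+1, exists b : 'I_k.+1, (a < b) && (s b < s a)]).
    by move=> /existsP [a /existsP [b /andP [h1 h2]]]; by exists a, b.
  move=> nE; exfalso; apply: nid; apply: incr_id => x y xy.
  case: (ltngtP (s x) (s y)) => // h.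
  - by move/negP: nE; case; apply/existsP; exists x; apply/existsP; exists y; rewrite xy h.
  - by move/val_inj/perm_inj: h => e; subst; rewrite ltnn in xy.
have a0 : 0 < (a : nat).
  case: (posnP a) => // e; have ea : a = ord0 by apply: val_inj.
  by move: sab; rewrite ea s0.
have [c [c0 c4 ca cb]] : exists c : nat, [/\ 0 < c, c < 4, c != a & c != b].
  case: (boolP (((a : nat) != 1) && ((b : nat) != 1))) => [/andP[x y]|h1].
    by exists 1; split; rewrite // eq_sym.
  case: (boolP (((a : nat) != 2) && ((b : nat) != 2))) => [/andP[x y]|h2].
    by exists 2; split; rewrite // eq_sym.
  exists 3; split => //; lia.
have ck : c < k.+1 by lia.
exists (Ordinal ck) => -[h [hlt H]].
set C := Ordinal ck.
have Fspec : forall j, lift (s C) (F C s j) = s (lift C j).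
  by move=> j; rewrite permE F_fun_spec.
have k0 : 0 < k by lia.
set z : 'I_k := Ordinal k0.
have lz : lift C z = ord0 by apply: val_inj; rewrite /= bumpE /= leqNgt c0.
have := Fspec z; rewrite lz s0 => /(congr1 val); rewrite /= bumpE.
rewrite H /= add0n modn_small // => hz.
have h0 : h = 0 by lia.
subst h.
have Fid : forall j, (F C s j : nat) = j.
  by move=> j; rewrite H /= addn0 modn_small.
case: (unliftP C a) => [a' ea|ea]; last by move: ca; rewrite ea eqxx.
case: (unliftP C b) => [b' eb|eb]; last by move: cb; rewrite eb eqxx.
move: ab sab; rewrite ea eb -!Fspec /= !bumpE !Fid.
case: (leqP c a'); case: (leqP c b'); case: (leqP (s C) a'); case: (leqP (s C) b'); simpl; lia.
Qed.
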